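(* Let $A$ be a set and $T=A^*$ the free monoid on $A$. Let $Y$ be a semilattice and let $\cdot$ be a left partial action of $T$ on $Y$ satisfying axioms (A), (B), (C), which is a partially defined action and such that the restriction semigroup $M(T,Y)$ is an ultra $F$-restriction monoid. Let $X=(Y\times T)/\!\approx$ be the poset and $*$ the left action of $T$ on $X$ given by $t*[y,s]=[y,ts]$ (constructed as in the context). Then: (1) $X$ is a meet semilattice; (2) $*$ is an action of $T$ on $X$ by order-embeddings such that for every $t\in T$ the range $\{t*x\colon x\in X\}$ is an order ideal of $X$, so that the $W$-product $W(T,X)$ can be formed; (3) $M(T,Y)$ embeds into $W(T,X)$ as a $(2,1,1)$-subalgebra (i.e. there is an injective homomorphism of $(2,1,1)$-algebras $M(T,Y)\to W(T,X)$).
   Context: A restriction semigroup is an algebra $(S,\cdot,{}^*,{}^+)$ where $(S,\cdot)$ is a semigroup and the identities $xx^*=x$, $x^*y^*=y^*x^*$, $(xy^* )^*=x^*y^*$, $x^*y=y(xy)^*$, $x^+x=x$, $x^+y^+=y^+x^+$, $(x^+y)^+=x^+y^+$, $xy^+=(xy)^+x$, $(x^+)^*=x^+$, $(x^* )^+=x^*$ hold; homomorphisms preserve the product and both unary operations. If it has an identity it is a restriction monoid. $P(S)=\{x^*\colon x\in S\}=\{x^+\colon x\in S\}$ is the semilattice of projections. $\sigma$ is the least congruence identifying all projections ($a\,\sigma\, b$ iff $ea=eb$ for some $e\in P(S)$). $S$ is proper if ($a^*=b^*$ and $a\,\sigma\, b$) implies $a=b$ and ($a^+=b^+$ and $a\,\sigma\,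 b$) implies $a=b$. The natural partial order is $a\le b$ iff $a=eb$ for some $e\in P(S)$. $S$ is $F$-restriction if every $\sigma$-class has a maximum element. A left partial action of a monoid $T$ on a set $Y$ is a partial map $(t,y)\mapsto t\cdot y$ with $1\cdot y$ defined and equal to $y$, and such that if $t\cdot y$ and $s\cdot(t\cdot y)$ are defined then $(st)\cdot y$ is defined and equals $s\cdot(t\cdot y)$. Write $\varphi_t$ for the partial map $y\mapsto t\cdot y$. For $Y$ a semilattice, the axioms are: (A) $\mathrm{dom}(\varphi_t)$ and $\mathrm{ran}(\varphi_t)$ are order ideals of $Y$; (B) $\varphi_t$ is an order-isomorphism from $\mathrm{dom}(\varphi_t)$ onto $\mathrm{ran}(\varphi_t)$; (C) $\mathrm{dom}(\varphi_t)\neq\varnothing$. The reverse right partial action $\circ$ is: $y\circ t$ is defined iff $y\in\mathrm{ran}(\varphi_t)$, and then $y\circ t=\varphi_t^{-1}(y)$. Then $M(T,Y)=\{(y,t)\in Y\times T\colon y\circ t \text{ defined}\}$ with $(x,s)(y,t)=(s\cdot((x\circ s)\wedge y),st)$, $(y,t)^*=(y\circ t,1)$, $(y,t)^+=(y,1)$ is a proper restriction semigroup. For a proper restriction semigroup $S$, its underlying left partial action is the partial action of $S/\sigma$ on $E=P(S)$: $t\cdot e$ is defined iff there is $a\in t$ with $a^*\ge e$, and then $t\cdot e=(ae)^+$. A left partial action is a partially defined action if for all $s,t,x$: $(st)\cdot x$ is defined iff $t\cdot x$ and $s\cdot(t\cdot x)$ are defined. A restriction semigroup is ultra proper if it is proper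 and its underlying left partial action is a partially defined action; an ultra $F$-restriction monoid is an ultra proper $F$-restriction monoid. Construction of $X$: for $(x,s),(y,t)\in Y\times T$ put $(x,s)\to(y,t)$ if there is $p\in T$ with $s=tp$, $p\cdot x$ defined and $p\cdot x=y$. Let $\sim$ be the equivalence relation generated by $\to$, with classes $[x,s]_\sim$. On $(Y\times T)/\!\sim$ put $A\ge B$ if there are $(x,s)\in A$ and $(y,s)\in B$ with $x\ge y$; this is a preorder. Let $(x,s)\approx(y,t)$ iff $[x,s]_\sim\le[y,t]_\sim$ and $[y,t]_\sim\le[x,s]_\sim$; $X=(Y\times T)/\!\approx$ with the induced partial order and classes $[x,s]$. The action $t*[y,s]=[y,ts]$ is well defined. $W$-product: if a monoid $T$ acts on the left on a semilattice $X$ by order-embeddings with each range $t*X$ an order ideal, then $W(T,X)=\{(t*y,t)\colon y\in X,t\in T\}$ with $(t*y,t)(s*x,s)=(t*y\wedge (ts)*x,ts)$, $(t*y,t)^*=(y,1)$, $(t*y,t)^+=(t*y,1)$. *)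

(* Defs.v *)
(* Free monoid T = A^* is [list A] with concatenation [++]
   (so the product st is s ++ t) and identity [nil]. *)
From Stdlib Require Import List Relations ClassicalEpsilon.
Import ListNotations.

Set Implicit Arguments.
Unset Strict Implicit.

Definition is_semilattice (Y : Type) (meet : Y -> Y -> Y) : Prop :=
  (forall x y z, meet x (meet y z) = meet (meet x y) z) /\
  (forall x y, meet x y = meet y x) /\
  (forall x, meet x x = x).

Definition leY (Y : Type) (meet : Y -> Y -> Y) (x y : Y) : Prop := meet x y = x.

Definition is_left_partial_action (A Y : Type) (act : list A -> Y -> option Y) : Prop :=
  (forall y, act [] y = Some y) /\
  (forall s t y z w, act t y = Some z -> act s z = Some w -> act (s ++ t) y = Some w).

Definition in_dom (A Y : Type) (act : list A -> Y -> option Y) (t : list A) (y : Y) :=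
  exists z, act t y = Some z.
Definition in_ran (A Y : Type) (act : list A -> Y -> option Y) (t : list A) (y : Y) :=
  exists z, act t z = Some y.

Definition axiomA (A Y : Type) (meet : Y -> Y -> Y) (act : list A -> Y -> option Y) :=
  forall t, (forall y y', in_dom act t y -> leY meet y' y -> in_dom act t y') /\
            (forall y y', in_ran act t y -> leY meet y' y -> in_ran act t y').

Definition axiomB (A Y : Type) (meet : Y -> Y -> Y) (act : list A -> Y -> option Y) :=
  forall t y1 y2 z1 z2, act t y1 = Some z1 -> act t y2 = Some z2 ->
    (leY meet y1 y2 <-> leY meet z1 z2).

Definition axiomC (A Y : Type) (act : list A -> Y -> option Y) :=
  forall t, exists y, in_dom act t y.

Definition partially_defined (A Y : Type) (act : list A -> Y -> option Y) :=
  forall s t x, in_dom act (s ++ t) x <->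
    (exists z, act t x = Some z /\ in_dom act s z).

(* reverse right partial action: y o t = phi_t^{-1}(y) *)
Definition rev_act (A Y : Type) (act : list A -> Y -> option Y) (t : list A) (y : Y)
  : option Y :=
  match excluded_middle_informative (in_ran act t y) with
  | left H => Some (proj1_sig (constructive_indefinite_description _ H))
  | right _ => None
  end.

(* carrier: pairs (y,t) with y o t defined; operations are total on Y * T
   with irrelevant default values outside the carrier. *)
Definition inM (A Y : Type) (act : list A -> Y -> option Y) (p : Y * list A) : Prop :=
  in_ran act (snd p) (fst p).

Definition mulM (A Y : Type) (meet : Y -> Y -> Y) (act : list A -> Y -> option Y)
  (p q : Y * list A) : Y * list A :=
  let (x, s) := p in let (y, t) := q in
  (match rev_act act s x with
   | Some u => match act s (meet u y) with Some v => v | None => x end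
   | None => x end, s ++ t).

Definition starM (A Y : Type) (act : list A -> Y -> option Y) (p : Y * list A)
  : Y * list A :=
  (match rev_act act (snd p) (fst p) with Some u => u | None => (fst p) end, []).

Definition plusM (A Y : Type) (p : Y * list A) : Y * list A := ((fst p), []).

Section Restriction.
Variables (S : Type) (inS : S -> Prop) (mul : S -> S -> S) (star plus : S -> S).

Definition is_restriction_semigroup : Prop :=
  (forall x y, inS x -> inS y -> inS (mul x y)) /\
  (forall x, inS x -> inS (star x)) /\ (forall x, inS x -> inS (plus x)) /\
  (forall x y z, inS x -> inS y -> inS z -> mul x (mul y z) = mul (mul x y) z) /\
  (forall x, inS x -> mul x (star x) = x) /\
  (forall x y, inS x -> inS y -> mul (star x) (star y) = mul (star y) (star x)) /\
  (forall x y, inS x -> inS y -> star (mul x (star y)) = mul (star x) (star y)) /\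
  (forall x y, inS x -> inS y -> mul (star x) y = mul y (star (mul x y))) /\
  (forall x, inS x -> mul (plus x) x = x) /\
  (forall x y, inS x -> inS y -> mul (plus x) (plus y) = mul (plus y) (plus x)) /\
  (forall x y, inS x -> inS y -> plus (mul (plus x) y) = mul (plus x) (plus y)) /\
  (forall x y, inS x -> inS y -> mul x (plus y) = mul (plus (mul x y)) x) /\
  (forall x, inS x -> star (plus x) = plus x) /\
  (forall x, inS x -> plus (star x) = star x).

Definition is_proj (e : S) : Prop := exists x, inS x /\ e = star x.

Definition rsigma (a b : S) : Prop := exists e, is_proj e /\ mul e a = mul e b.

Definition nat_le (a b : S) : Prop := exists e, is_proj e /\ a = mul e b.

Definition is_proper : Prop :=
  (forall a b, inS a -> inS b -> star a = star b -> rsigma a b -> a = b) /\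
  (forall a b, inS a -> inS b -> plus a = plus b -> rsigma a b -> a = b).

Definition has_identity : Prop :=
  exists one, inS one /\ forall x, inS x -> mul one x = x /\ mul x one = x.

Definition is_F_restriction : Prop :=
  forall a, inS a -> exists m, inS m /\ rsigma a m /\
    forall b, inS b -> rsigma a b -> nat_le b m.

(* underlying left partial action of S/sigma on P(S), via representatives:
   ua c e f  iff  [c]_sigma . e is defined and equals f, i.e. there is a in
   the class of c with a^* >= e, and f = (a e)^+ *)
Definition ua (c e f : S) : Prop :=
  exists a, inS a /\ rsigma a c /\ nat_le e (star a) /\ f = plus (mul a e).

Definition ua_partially_defined : Prop :=
  forall c d e, inS c -> inS d -> is_proj e ->
    ((exists f, ua (mul c d) e f) <-> (exists g, ua d e g /\ exists f, ua c g f)).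

Definition is_ultra_proper : Prop := is_proper /\ ua_partially_defined.

Definition is_ultra_F_restriction_monoid : Prop :=
  is_restriction_semigroup /\ has_identity /\ is_ultra_proper /\ is_F_restriction.

End Restriction.

Definition arrow (A Y : Type) (act : list A -> Y -> option Y) (p q : Y * list A) : Prop :=
  exists r, (snd p) = (snd q) ++ r /\ act r (fst p) = Some (fst q).

Definition simX (A Y : Type) (act : list A -> Y -> option Y) : relation (Y * list A) :=
  clos_refl_sym_trans _ (arrow act).

Definition leX (A Y : Type) (meet : Y -> Y -> Y) (act : list A -> Y -> option Y)
  (p q : Y * list A) : Prop :=
  exists x y s, simX act q (x, s) /\ simX act p (y, s) /\ leY meet y x.

(* ~~ : the induced equivalence; X is Y x T modulo approxX, ordered by leX *)
Definition approxX (A Y : Type) (meet : Y -> Y -> Y) (act : list A -> Y -> option Y)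
  (p q : Y * list A) : Prop := leX meet act p q /\ leX meet act q p.

Definition actX (A Y : Type) (t : list A) (p : Y * list A) : Y * list A :=
  ((fst p), t ++ (snd p)).

Definition is_meetX (A Y : Type) (meet : Y -> Y -> Y) (act : list A -> Y -> option Y)
  (m p q : Y * list A) : Prop :=
  leX meet act m p /\ leX meet act m q /\
  forall r, leX meet act r p -> leX meet act r q -> leX meet act r m.

Definition inW (A Y : Type) (meet : Y -> Y -> Y) (act : list A -> Y -> option Y)
  (w : (Y * list A) * list A) : Prop :=
  exists y, approxX meet act (fst w) (actX (snd w) y).

(* equality in W(T,X) (first component is a ~~-class) *)
Definition eqW (A Y : Type) (meet : Y -> Y -> Y) (act : list A -> Y -> option Y)
  (w v : (Y * list A) * list A) : Prop :=
  approxX meet act (fst w) (fst v) /\ (snd w) = (snd v).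

(* Main.v *)
Require Import Defs.
From Stdlib Require Import List Relations ClassicalEpsilon.
Import ListNotations.

Record Good {A Y : Type} (meet : Y -> Y -> Y) (act : list A -> Y -> option Y) : Prop :=
  { g_Y : is_semilattice meet; g_pa : is_left_partial_action act;
    g_A : axiomA meet act; g_B : axiomB meet act; g_pd : partially_defined act }.
Arguments g_Y {A Y meet act}.
Arguments g_pa {A Y meet act}.
Arguments g_A {A Y meet act}.
Arguments g_B {A Y meet act}.
Arguments g_pd {A Y meet act}.


Lemma le_refl {Y} {meet : Y -> Y -> Y} (HY : is_semilattice meet) x : leY meet x x.
Proof. destruct HY as [? [? ?]]; unfold leY; auto. Qed.
Lemma le_trans' {Y} {meet : Y -> Y -> Y} (HY : is_semilattice meet){x y z} :
  leY meet x y -> leY meet y z -> leY meet x z.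
Proof. destruct HY as [Ha [Hc Hi]]; unfold leY; intros H1 H2.
  rewrite <- H1, <- Ha, H2; auto. Qed.
Lemma le_antisym {Y} {meet : Y -> Y -> Y} (HY : is_semilattice meet){x y} :
  leY meet x y -> leY meet y x -> x = y.
Proof. destruct HY as [Ha [Hc Hi]]; unfold leY; intros H1 H2.
  rewrite <- H1, Hc; auto. Qed.
Lemma meet_le_l {Y} {meet : Y -> Y -> Y} (HY : is_semilattice meet) x y :
  leY meet (meet x y) x.
Proof. destruct HY as [Ha [Hc Hi]]; unfold leY.
  rewrite Hc, Ha, Hi; auto. Qed.
Lemma meet_le_r {Y} {meet : Y -> Y -> Y} (HY : is_semilattice meet) x y :
  leY meet (meet x y) y.
Proof. destruct HY as [Ha [Hc Hi]]; unfold leY.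
  rewrite <- Ha, Hi; auto. Qed.
Lemma le_meet {Y} {meet : Y -> Y -> Y} (HY : is_semilattice meet){x y z} :
  leY meet z x -> leY meet z y -> leY meet z (meet x y).
Proof. destruct HY as [Ha [Hc Hi]]; unfold leY; intros H1 H2.
  rewrite Ha, H1; auto. Qed.


Lemma act_nil {A Y} {meet : Y -> Y -> Y} {act : list A -> Y -> option Y} (G : Good meet act) y :
  act [] y = Some y.
Proof. apply (g_pa G). Qed.
Lemma act_comp {A Y} {meet : Y -> Y -> Y} {act : list A -> Y -> option Y} (G : Good meet act){s t y z w} :
  act t y = Some z -> act s z = Some w -> act (s ++ t) y = Some w.
Proof. apply (g_pa G). Qed.
Lemma act_split {A Y} {meet : Y -> Y -> Y} {act : list A -> Y -> option Y} (G : Good meet act){s t y w} :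
  act (s ++ t) y = Some w -> exists z, act t y = Some z /\ act s z = Some w.
Proof. intros H. destruct (proj1 (g_pd G s t y) (ex_intro _ w H)) as [z [H1 [w' H2]]].
  exists z; split; auto. pose proof (act_comp G H1 H2). congruence. Qed.
Lemma act_mono {A Y} {meet : Y -> Y -> Y} {act : list A -> Y -> option Y} (G : Good meet act){t y1 y2 z1 z2} :
  act t y1 = Some z1 -> act t y2 = Some z2 -> leY meet y1 y2 -> leY meet z1 z2.
Proof. intros H1 H2. apply (g_B G t y1 y2 z1 z2 H1 H2). Qed.
Lemma act_rmono {A Y} {meet : Y -> Y -> Y} {act : list A -> Y -> option Y} (G : Good meet act){t y1 y2 z1 z2} :
  act t y1 = Some z1 -> act t y2 = Some z2 -> leY meet z1 z2 -> leY meet y1 y2.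
Proof. intros H1 H2. apply (g_B G t y1 y2 z1 z2 H1 H2). Qed.
Lemma act_inj {A Y} {meet : Y -> Y -> Y} {act : list A -> Y -> option Y} (G : Good meet act){t y1 y2 z} :
  act t y1 = Some z -> act t y2 = Some z -> y1 = y2.
Proof. intros H1 H2. apply (le_antisym (g_Y G)).
  - apply (act_rmono G H1 H2), le_refl, (g_Y G).
  - apply (act_rmono G H2 H1), le_refl, (g_Y G). Qed.
Lemma dom_down {A Y} {meet : Y -> Y -> Y} {act : list A -> Y -> option Y} (G : Good meet act){t x z y} :
  act t x = Some z -> leY meet y x -> exists w, act t y = Some w.
Proof. intros H1 H2. apply (proj1 (g_A G t) x y); auto. exists z; auto. Qed.
Lemma ran_down {A Y} {meet : Y -> Y -> Y} {act : list A -> Y -> option Y} (G : Good meet act){t x z w} :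
  act t x = Some z -> leY meet w z -> exists y, act t y = Some w.
Proof. intros H1 H2. apply (proj2 (g_A G t) z w); auto. exists x; auto. Qed.
Lemma rev_act_spec {A Y} (act : list A -> Y -> option Y) t y :
  in_ran act t y -> exists u, rev_act act t y = Some u /\ act t u = Some y.
Proof. intros H. unfold rev_act. destruct (excluded_middle_informative (in_ran act t y)) as [H'|H'].
  - destruct (constructive_indefinite_description _ H') as [u Hu]; simpl. exists u; auto.
  - contradiction. Qed.
Lemma rev_act_nil {A Y} {meet : Y -> Y -> Y} {act : list A -> Y -> option Y} (G : Good meet act) w :
  rev_act act [] w = Some w.
Proof. destruct (rev_act_spec act [] w) as [u [H1 H2]].
  - exists w; apply (act_nil G).
  - rewrite (act_nil G) in H2. congruence. Qed.

Definition J {A Y} (act : list A -> Y -> option Y) (p q : Y * list A) :=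
  exists c, arrow act p c /\ arrow act q c.

Lemma arrow_refl {A Y} {meet : Y -> Y -> Y} {act : list A -> Y -> option Y} (G : Good meet act) p :
  arrow act p p.
Proof. exists []. rewrite app_nil_r. split; auto. apply (act_nil G). Qed.
Lemma arrow_trans {A Y} {meet : Y -> Y -> Y} {act : list A -> Y -> option Y} (G : Good meet act){p q r} :
  arrow act p q -> arrow act q r -> arrow act p r.
Proof. intros [r1 [E1 H1]] [r2 [E2 H2]]. exists (r2 ++ r1). split.
  - rewrite E1, E2, app_assoc; auto.
  - apply (act_comp G H1 H2). Qed.
Lemma arrow_confl {A Y} {meet : Y -> Y -> Y} {act : list A -> Y -> option Y} (G : Good meet act){q c1 c2} :
  arrow act q c1 -> arrow act q c2 -> arrow act c1 c2 \/ arrow act c2 c1.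
Proof. destruct q as [x s], c1 as [y1 t1], c2 as [y2 t2]; simpl.
  intros [p1 [E1 H1]] [p2 [E2 H2]]; simpl in *. subst s.
  destruct (app_eq_app _ _ _ _ E2) as [l [[Ea Eb]|[Ea Eb]]].
  - subst. left. destruct (act_split G H2) as [z [Hz1 Hz2]].
    exists l; simpl; split; auto. congruence.
  - subst. right. destruct (act_split G H1) as [z [Hz1 Hz2]].
    exists l; simpl; split; auto. congruence. Qed.
Lemma J_refl {A Y} {meet : Y -> Y -> Y} {act : list A -> Y -> option Y} (G : Good meet act) p : J act p p.
Proof. exists p; split; apply (arrow_refl G). Qed.
Lemma J_sym {A Y} {act : list A -> Y -> option Y}{p q} : J act p q -> J act q p.
Proof. intros [c [H1 H2]]; exists c; auto. Qed.
Lemma J_trans {A Y} {meet : Y -> Y -> Y} {act : list A -> Y -> option Y} (G : Good meet act){p q r} :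
  J act p q -> J act q r -> J act p r.
Proof. intros [c1 [H1 H2]] [c2 [H3 H4]].
  destruct (arrow_confl G H2 H3) as [H|H].
  - exists c2; split; auto. apply (arrow_trans G H1 H).
  - exists c1; split; auto. apply (arrow_trans G H4 H). Qed.
Lemma J_arrow {A Y} {meet : Y -> Y -> Y} {act : list A -> Y -> option Y} (G : Good meet act){p q} :
  arrow act p q -> J act p q.
Proof. intros H; exists q; split; auto; apply (arrow_refl G). Qed.
Lemma sim_J {A Y} {meet : Y -> Y -> Y} {act : list A -> Y -> option Y} (G : Good meet act){p q} :
  simX act p q <-> J act p q.
Proof. split.
  - induction 1.
    + apply (J_arrow G); auto.
    + apply (J_refl G).
    + apply J_sym; auto.
    + apply (J_trans G IHclos_refl_sym_trans1 IHclos_refl_sym_trans2).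
  - intros [c [H1 H2]]. apply rst_trans with c. apply rst_step; auto.
    apply rst_sym, rst_step; auto. Qed.

Lemma transfer {A Y} {meet : Y -> Y -> Y} {act : list A -> Y -> option Y} (G : Good meet act)
  {x t x' t' b} : J act (x, t) (x', t') -> leY meet b x ->
  exists b', leY meet b' x' /\ J act (b, t) (b', t').
Proof. intros [[c0 u] [[r1 [E1 H1]] [r2 [E2 H2]]]] Hb; simpl in *.
  destruct (dom_down G H1 Hb) as [b1 Hb1].
  assert (Hle : leY meet b1 c0) by apply (act_mono G Hb1 H1 Hb).
  destruct (ran_down G H2 Hle) as [b' Hb'].
  exists b'; split.
  - apply (act_rmono G Hb' H2 Hle).
  - exists (b1, u); split.
    + exists r1; auto.
    + exists r2; auto. Qed.

Lemma leX_at {A Y} {meet : Y -> Y -> Y} {act : list A -> Y -> option Y} (G : Good meet act)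
  {r x t} : leX meet act r (x, t) -> exists a, leY meet a x /\ J act r (a, t).
Proof. intros [x0 [y0 [s0 [H1 [H2 H3]]]]].
  apply (sim_J G) in H1. apply (sim_J G) in H2.
  destruct (transfer G (J_sym H1) H3) as [a [Ha HJ]].
  exists a; split; auto. apply (J_trans G H2 HJ). Qed.

Lemma leX_of {A Y} {meet : Y -> Y -> Y} {act : list A -> Y -> option Y} (G : Good meet act)
  {r x t a} : J act r (a, t) -> leY meet a x -> leX meet act r (x, t).
Proof. intros H1 H2. exists x, a, t; split; [apply rst_refl|split; auto].
  apply (sim_J G); auto. Qed.

Lemma leX_refl {A Y} {meet : Y -> Y -> Y} {act : list A -> Y -> option Y} (G : Good meet act) p :
  leX meet act p p.
Proof. destruct p as [x t]. apply (leX_of G (J_refl G _)). apply le_refl, (g_Y G). Qed.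

Lemma leX_trans {A Y} {meet : Y -> Y -> Y} {act : list A -> Y -> option Y} (G : Good meet act)
  {p q r} : leX meet act p q -> leX meet act q r -> leX meet act p r.
Proof. destruct q as [x t], r as [z u]. intros H1 H2.
  destruct (leX_at G H1) as [b [Hb Jb]].
  destruct (leX_at G H2) as [a [Ha Ja]].
  destruct (transfer G Ja Hb) as [b' [Hb' Jb']].
  apply (leX_of G (J_trans G Jb Jb')). apply (le_trans' (g_Y G) Hb' Ha). Qed.

Lemma J_approx {A Y} {meet : Y -> Y -> Y} {act : list A -> Y -> option Y} (G : Good meet act)
  {p q} : J act p q -> approxX meet act p q.
Proof. intros H. destruct p as [y s], q as [x t]. split.
  - apply (leX_of G H), le_refl, (g_Y G).
  - apply (leX_of G (J_sym H)), le_refl, (g_Y G). Qed.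

Lemma approx_trans {A Y} {meet : Y -> Y -> Y} {act : list A -> Y -> option Y} (G : Good meet act)
  {p q r} : approxX meet act p q -> approxX meet act q r -> approxX meet act p r.
Proof. intros [H1 H2] [H3 H4]; split; eapply (leX_trans G); eauto. Qed.

Lemma arrow_actX {A Y} {meet : Y -> Y -> Y} {act : list A -> Y -> option Y} (G : Good meet act)
  {t p q} : arrow act p q -> arrow act (actX t p) (actX t q).
Proof. intros [r [E H]]. exists r; simpl; split; auto. rewrite E, app_assoc; auto. Qed.

Lemma J_actX {A Y} {meet : Y -> Y -> Y} {act : list A -> Y -> option Y} (G : Good meet act)
  {t p q} : J act p q -> J act (actX t p) (actX t q).
Proof. intros [c [H1 H2]]. exists (actX t c); split; apply (arrow_actX G); auto. Qed.

Lemma J_cancel {A Y} {meet : Y -> Y -> Y} {act : list A -> Y -> option Y} (G : Good meet act)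
  {t y s1 a s2} : J act (y, t ++ s1) (a, t ++ s2) -> J act (y, s1) (a, s2).
Proof. intros [[c0 u] [[q1 [E1 H1]] [q2 [E2 H2]]]]; simpl in *.
  destruct (app_eq_app _ _ _ _ E1) as [l [[Ea Eb]|[Ea Eb]]].
  - subst t. rewrite <- app_assoc in E2. apply app_inv_head in E2. subst q1 q2.
    destruct (act_split G H1) as [y' [Hy1 Hy2]].
    destruct (act_split G H2) as [a' [Ha1 Ha2]].
    pose proof (act_inj G Hy2 Ha2). subst a'.
    exists (y', []); split; [exists s1|exists s2]; simpl; auto.
  - subst u. rewrite <- app_assoc in E2. apply app_inv_head in E2.
    exists (c0, l); split.
    + exists q1; simpl; auto.
    + exists q2; simpl; auto. Qed.

Lemma leX_act {A Y} {meet : Y -> Y -> Y} {act : list A -> Y -> option Y} (G : Good meet act)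
  t p q : leX meet act p q <-> leX meet act (actX t p) (actX t q).
Proof. destruct q as [x u], p as [y s]. split; intros H.
  - destruct (leX_at G H) as [a [Ha Ja]].
    apply (J_actX G (t:=t)) in Ja. simpl in *. apply (leX_of G Ja Ha).
  - simpl in H. destruct (leX_at G H) as [a [Ha Ja]].
    apply (J_cancel G) in Ja. apply (leX_of G Ja Ha). Qed.

Lemma mulM_nil {A Y} {meet : Y -> Y -> Y} {act : list A -> Y -> option Y} (G : Good meet act)
  e m t : mulM meet act (e, []) (m, t) = (meet e m, t).
Proof. unfold mulM. rewrite (rev_act_nil G), (act_nil G). reflexivity. Qed.
Lemma starM_nil {A Y} {meet : Y -> Y -> Y} {act : list A -> Y -> option Y} (G : Good meet act)
  w : starM act (w, []) = (w, []).
Proof. unfold starM; simpl. rewrite (rev_act_nil G). reflexivity. Qed.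
Lemma proj_shape {A Y} {act : list A -> Y -> option Y} {e} :
  is_proj (inM act) (starM act) e -> e = (fst e, []).
Proof. intros [x [_ ->]]. reflexivity. Qed.

Lemma dmax {A Y} {meet : Y -> Y -> Y} {act : list A -> Y -> option Y} (G : Good meet act)
  (HC : axiomC act)
  (HF : is_F_restriction (inM act) (mulM meet act) (starM act)) t :
  exists d, (exists z, act t d = Some z) /\ forall y z, act t y = Some z -> leY meet y d.
Proof.
  destruct (HC t) as [z0 [y0 H0]].
  destruct (HF (y0, t)) as [[m1 m2] [Hm [Hs Hmax]]]. { exists z0; auto. }
  destruct Hs as [[e0 e1] [He Heq]]. rewrite (proj_shape He) in Heq. cbn [fst] in Heq.
  rewrite !(mulM_nil G) in Heq. injection Heq; intros; subst m2.
  destruct Hm as [d Hd]. simpl in Hd.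
  exists d. split; [exists m1; auto|]. intros y z Hyz.
  assert (Hle : leY meet z m1).
  { destruct (Hmax (z, t)) as [[f0 f1] [Hf Hb]].
    - exists y; auto.
    - exists (meet y0 z, []). split.
      + exists (meet y0 z, []); split.
        * exists (meet y0 z). apply (act_nil G).
        * rewrite (starM_nil G). reflexivity.
      + rewrite !(mulM_nil G). f_equal.
        rewrite (meet_le_l (g_Y G) y0 z). rewrite (meet_le_r (g_Y G) y0 z). reflexivity.
    - rewrite (proj_shape Hf) in Hb. cbn [fst] in Hb. rewrite (mulM_nil G) in Hb.
      injection Hb; intros; subst z. apply meet_le_r, (g_Y G). }
  apply (act_rmono G Hyz Hd Hle). Qed.

Fixpoint lcp {A} (s t : list A) : list A :=
  match s, t with
  | a :: s', b :: t' => if excluded_middle_informative (a = b) then a :: lcp s' t' else []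
  | _, _ => []
  end.
Lemma lcp_l {A} (s t : list A) : exists s', s = lcp s t ++ s'.
Proof. revert t; induction s as [|a s IH]; intros [|b t]; simpl; eauto.
  destruct (excluded_middle_informative (a = b)).
  - destruct (IH t) as [s' E]. exists s'. simpl. congruence.
  - exists (a :: s); auto. Qed.
Lemma lcp_r {A} (s t : list A) : exists t', t = lcp s t ++ t'.
Proof. revert t; induction s as [|a s IH]; intros [|b t]; simpl; eauto.
  destruct (excluded_middle_informative (a = b)).
  - destruct (IH t) as [t' E]. exists t'. simpl. congruence.
  - exists (b :: t); auto. Qed.
Lemma lcp_max {A} (u q1 q2 : list A) : exists w, lcp (u ++ q1) (u ++ q2) = u ++ w.
Proof. induction u as [|a u IH]; simpl.
  - eauto.
  - destruct (excluded_middle_informative (a = a)) as [_|n]; [|contradiction].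
    destruct IH as [w E]; exists w; rewrite E; auto. Qed.

Lemma meet_exists {A Y} {meet : Y -> Y -> Y} {act : list A -> Y -> option Y} (G : Good meet act)
  (Hd : forall t, exists d, (exists z, act t d = Some z) /\ forall y z, act t y = Some z -> leY meet y d)
  p q : exists m, is_meetX meet act m p q.
Proof.
  pose proof (g_Y G) as HY.
  destruct p as [y s], q as [x t].
  destruct (lcp_l s t) as [s' Es]. destruct (lcp_r s t) as [t' Et].
  destruct (Hd s') as [d1 [[z1 Hz1] Hd1]]. destruct (Hd t') as [d2 [[z2 Hz2] Hd2]].
  destruct (dom_down G Hz1 (meet_le_r HY y d1)) as [e2 He2].
  destruct (dom_down G Hz2 (meet_le_r HY x d2)) as [e1 He1].
  exists (meet e1 e2, lcp s t). split; [|split].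
  - destruct (ran_down G He2 (meet_le_r HY e1 e2)) as [b Hb].
    assert (HJ : J act (meet e1 e2, lcp s t) (b, s)).
    { apply J_sym, (J_arrow G). exists s'; simpl; split; auto. }
    apply (leX_of G HJ). apply (le_trans' HY (act_rmono G Hb He2 (meet_le_r HY e1 e2))).
    apply meet_le_l, HY.
  - destruct (ran_down G He1 (meet_le_l HY e1 e2)) as [b Hb].
    assert (HJ : J act (meet e1 e2, lcp s t) (b, t)).
    { apply J_sym, (J_arrow G). exists t'; simpl; split; auto. }
    apply (leX_of G HJ). apply (le_trans' HY (act_rmono G Hb He1 (meet_le_l HY e1 e2))).
    apply meet_le_l, HY.
  - intros r H1 H2.
    destruct (leX_at G H1) as [b [Hb Jb]].
    destruct (leX_at G H2) as [a [Ha Ja]].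
    destruct (J_trans G (J_sym Ja) Jb) as [[c0 u] [[q1 [E1 Hq1]] [q2 [E2 Hq2]]]].
    simpl in *.
    destruct (lcp_max u q2 q1) as [w Ew]. rewrite <- E1, <- E2 in Ew.
    assert (Hq1e : u ++ q1 = u ++ (w ++ t')) by (rewrite <- E1, app_assoc, <- Ew; exact Et).
    assert (Hq2e : u ++ q2 = u ++ (w ++ s')) by (rewrite <- E2, app_assoc, <- Ew; exact Es).
    apply app_inv_head in Hq1e. apply app_inv_head in Hq2e. subst q1 q2.
    destruct (act_split G Hq1) as [a' [Ha1 Ha2]].
    destruct (act_split G Hq2) as [b' [Hb1 Hb2]].
    pose proof (act_inj G Ha2 Hb2); subst b'.
    assert (L1 : leY meet a' e1).
    { apply (act_mono G Ha1 He1). apply (le_meet HY Ha). apply (Hd2 a a' Ha1). }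
    assert (L2 : leY meet a' e2).
    { apply (act_mono G Hb1 He2). apply (le_meet HY Hb). apply (Hd1 b a' Hb1). }
    assert (HJ : J act r (a', lcp s t)).
    { apply (J_trans G Ja). apply (J_arrow G). exists t'; simpl; split; auto. }
    apply (leX_of G HJ). apply (le_meet HY L1 L2). Qed.

Lemma J_nil {A Y} {meet : Y -> Y -> Y} {act : list A -> Y -> option Y} (G : Good meet act)
  {x a} : J act (x, []) (a, []) -> x = a.
Proof. intros [[c0 u] [[q1 [E1 H1]] [q2 [E2 H2]]]]; simpl in *.
  symmetry in E1, E2. apply app_eq_nil in E1 as [-> ->]. apply app_eq_nil in E2 as [_ ->].
  rewrite (act_nil G) in H1, H2. congruence. Qed.

Theorem theorem5p1 (A Y : Type) (meet : Y -> Y -> Y) (act : list A -> Y -> option Y)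
  (HY : is_semilattice meet)
  (Hpa : is_left_partial_action act)
  (HA : axiomA meet act) (HB : axiomB meet act) (HC : axiomC act)
  (Hpd : partially_defined act)
  (HM : is_ultra_F_restriction_monoid (inM act) (mulM meet act) (starM act) (@plusM A Y)) :
  ((forall p, leX meet act p p) /\
   (forall p q r, leX meet act p q -> leX meet act q r -> leX meet act p r) /\
   (forall p q, exists m, is_meetX meet act m p q)) /\
  ((forall p, approxX meet act (actX [] p) p) /\
   (forall s t p, approxX meet act (actX (s ++ t) p) (actX s (actX t p))) /\
   (forall t p q, leX meet act p q <-> leX meet act (actX t p) (actX t q)) /\
   (forall t p q, leX meet act q (actX t p) -> exists r, approxX meet act q (actX t r))) /\
  (exists phi : Y * list A -> (Y * list A) * list A,
     (forall m, inM act m -> inW meet act (phi m)) /\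
     (forall m n, inM act m -> inM act n -> eqW meet act (phi m) (phi n) -> m = n) /\
     (forall m n, inM act m -> inM act n ->
        is_meetX meet act (fst (phi (mulM meet act m n))) (fst (phi m)) (actX (snd (phi m)) (fst (phi n))) /\
        (snd (phi (mulM meet act m n))) = (snd (phi m)) ++ (snd (phi n))) /\
     (forall m y, inM act m -> approxX meet act (fst (phi m)) (actX (snd (phi m)) y) ->
        eqW meet act (phi (starM act m)) (y, [])) /\
     (forall m, inM act m -> eqW meet act (phi (plusM m)) ((fst (phi m)), []))).
Proof.
  pose proof (@Build_Good A Y meet act HY Hpa HA HB Hpd) as G.
  destruct HM as [_ [_ [_ HF]]].
  split; [|split].
  - split; [|split].
    + apply (leX_refl G).
    + intros p q r; apply (leX_trans G).
    + apply (meet_exists G (dmax G HC HF)).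
  - split; [|split; [|split]].
    + intros [y s]. apply (J_approx G). unfold actX; simpl. apply (J_refl G).
    + intros s t [y u]. apply (J_approx G). unfold actX; simpl. rewrite app_assoc. apply (J_refl G).
    + intros t p q; apply (leX_act G).
    + intros t [y s] q H. unfold actX in H; simpl in H.
      destruct (leX_at G H) as [a [_ Ja]]. exists (a, s).
      apply (J_approx G). unfold actX; simpl. exact Ja.
  - exists (fun m : Y * list A => ((fst m, @nil A), snd m)).
    split; [|split; [|split; [|split]]].
    + intros [y t] [z Hz]; simpl in *. exists (z, []).
      apply (J_approx G). apply J_sym, (J_arrow G). exists t; simpl.
      split; [rewrite app_nil_r; reflexivity | exact Hz].
    + intros [x s] [y t] _ _ [Hap Ht]; simpl in *. subst t.
      destruct Hap as [H1 H2].
      destruct (leX_at G H1) as [a [Ha Ja]]. apply (J_nil G) in Ja. subst a.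
      destruct (leX_at G H2) as [a [Ha' Ja]]. apply (J_nil G) in Ja. subst a.
      rewrite (le_antisym HY Ha Ha'). reflexivity.
    + intros [x s] [y t] [u0 Hu0] _.
      destruct (rev_act_spec act s x (ex_intro _ u0 Hu0)) as [u [Hrev Hux]].
      destruct (dom_down G Hux (meet_le_l HY u y)) as [v Hv].
      assert (Hm : mulM meet act (x, s) (y, t) = (v, s ++ t)).
      { unfold mulM. rewrite Hrev, Hv. reflexivity. }
      rewrite Hm. simpl. split; [|reflexivity]. unfold actX; simpl.
      rewrite app_nil_r. split; [|split].
      * apply (leX_of G (J_refl G _)). apply (act_mono G Hv Hux (meet_le_l HY u y)).
      * assert (HJ : J act (v, []) (meet u y, s)).
        { apply J_sym, (J_arrow G). exists s; simpl; split; [reflexivity | exact Hv]. }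
        apply (leX_of G HJ). apply meet_le_r, HY.
      * intros r H1 H2.
        destruct (leX_at G H1) as [a [Ha Ja]].
        destruct (leX_at G H2) as [b [Hb Jb]].
        destruct (J_trans G (J_sym Ja) Jb) as [[c0 u'] [[q1 [E1 Hq1]] [q2 [E2 Hq2]]]].
        simpl in *. symmetry in E1. apply app_eq_nil in E1 as [-> ->].
        rewrite (act_nil G) in Hq1. injection Hq1; intros; subst c0. simpl in E2; subst q2.
        assert (Hbu : leY meet b u) by apply (act_rmono G Hq2 Hux Ha).
        apply (leX_of G Ja). apply (act_mono G Hq2 Hv (le_meet HY Hbu Hb)).
    + intros [y t] y' [u0 Hu0] Hap.
      destruct (rev_act_spec act t y (ex_intro _ u0 Hu0)) as [u [Hrev Hu]].
      unfold starM; simpl. rewrite Hrev. split; [|reflexivity].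
      assert (K : approxX meet act (actX t (u, [])) (actX t y')).
      { refine (approx_trans G (q := (y, [])) _ Hap).
        apply (J_approx G), (J_arrow G). exists t; simpl.
        split; [rewrite app_nil_r; reflexivity | exact Hu]. }
      destruct K as [K1 K2]. split; apply (leX_act G t); assumption.
    + intros [y t] _. simpl. split; [apply (J_approx G), (J_refl G) | reflexivity].
Qed.
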